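(* Let $v_\pm>0$ and $u_->u_+$. For $\epsilon_1,\epsilon_2>0$ let $(u^{\epsilon_1\epsilon_2},v^{\epsilon_1\epsilon_2})(t,x)$ be the two-shock Riemann solution of the perturbed Brio system with data $(u_\pm,v_\pm)$. Then as $\epsilon_1,\epsilon_2\to0$, in the sense of distributions on $\{(t,x):t>0\}$, $$u^{\epsilon_1\epsilon_2}\to u_-+(u_+-u_-)H(x-\sigma t),\qquad v^{\epsilon_1\epsilon_2}\to v_-+(v_+-v_-)H(x-\sigma t)+w(t)\,\delta_S,$$ where $H$ is the Heaviside function, $\sigma=\tfrac12(u_-+u_+)$, $S=\{(t,\sigma t):t\ge0\}$ and $w(t)=\tfrac12(v_-+v_+)(u_--u_+)t$; i.e., for every $\phi\in C_0^\infty$ on $t>0$, $\iint v^{\epsilon_1\epsilon_2}\phi\,dx\,dt\to\iint(v_-+(v_+-v_-)H(x-\sigma t))\phi\,dx\,dt+\int_0^\infty w(t)\phi(t,\sigma t)\,dt$. This limit is the delta-shock solution of the transport equations $u_t+(\tfrac12u^2)_x=0$, $v_t+(uv)_x=0$ with the same Riemann data.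
   Context: Perturbed Brio system: $u_t+(\tfrac12u^2+\tfrac12\epsilon_1v^2)_x=0$, $v_t+(uv-\epsilon_2v)_x=0$, $\epsilon_1,\epsilon_2>0$, $v>0$, with Riemann data $(u_-,v_-)$ for $x<0$, $(u_+,v_+)$ for $x>0$. The two-shock Riemann solution is: $(u_-,v_-)$ for $x/t<\sigma_1$, $(u_*,v_* )$ for $\sigma_1<x/t<\sigma_2$, $(u_+,v_+)$ for $x/t>\sigma_2$, where $v_*>\max(v_-,v_+)$, $u_+<u_*<u_-$, $$u_*=u_-+(v_*-v_-)\frac{\epsilon_2-\sqrt{\epsilon_2^2+4\epsilon_1(v_*+v_-)^2}}{v_*+v_-},\qquad u_+=u_*+(v_+-v_* )\frac{\epsilon_2+\sqrt{\epsilon_2^2+4\epsilon_1(v_*+v_+)^2}}{v_*+v_+},$$ $\sigma_1=u_-+\frac{v_*(u_*-u_-)}{v_*-v_-}-\epsilon_2$, $\sigma_2=u_++\frac{v_*(u_+-u_* )}{v_+-v_*}-\epsilon_2$. The weighted delta function on $S$ is defined by $\langle w\delta_S,\phi\rangle=\int_0^\infty w(t)\phi(t,\sigma t)\,dt$. *)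

(* Defs.v *)
From Stdlib Require Import Reals Lra.
Open Scope R_scope.

(* Heaviside function (value at 0 is irrelevant for the integrals). *)
Definition Heav (y : R) : R := if Rlt_dec 0 y then 1 else 0.

Definition RInt_is (f : R -> R) (a b I : R) : Prop :=
  exists pr : Riemann_integrable f a b, RiemannInt pr = I.

Definition DInt_is (F : R -> R -> R) (a b c d I : R) : Prop :=
  exists g : R -> R,
    (forall t, a <= t <= b -> RInt_is (fun x => F t x) c d (g t)) /\
    RInt_is g a b I.

Definition cont2 (f : R -> R -> R) : Prop :=
  forall t x eps, 0 < eps -> exists del, 0 < del /\
    forall t' x', Rabs (t' - t) < del -> Rabs (x' - x) < del ->
      Rabs (f t' x' - f t x) < eps.

(* C^infinity in (t,x): a family D i j of all mixed partial derivatives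
   d_t^i d_x^j f, each jointly continuous. *)
Definition smooth2 (f : R -> R -> R) : Prop :=
  exists D : nat -> nat -> R -> R -> R,
    (forall t x, D O O t x = f t x) /\
    (forall i j, cont2 (D i j)) /\
    (forall i j t x, derivable_pt_lim (fun s => D i j s x) t (D (S i) j t x)) /\
    (forall i j t x, derivable_pt_lim (fun y => D i j t y) x (D i (S j) t x)).

Definition ustar_formula (e1 e2 um vm vs : R) : R :=
  um + (vs - vm) * (e2 - sqrt (e2 ^ 2 + 4 * e1 * (vs + vm) ^ 2)) / (vs + vm).
Definition uplus_formula (e1 e2 us vs vp : R) : R :=
  us + (vp - vs) * (e2 + sqrt (e2 ^ 2 + 4 * e1 * (vs + vp) ^ 2)) / (vs + vp).

Definition two_shock (e1 e2 um vm up vp us vs : R) : Prop :=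
  Rmax vm vp < vs /\ up < us < um /\
  us = ustar_formula e1 e2 um vm vs /\
  up = uplus_formula e1 e2 us vs vp.

Definition sigma1 (e2 um vm us vs : R) : R :=
  um + vs * (us - um) / (vs - vm) - e2.
Definition sigma2 (e2 up vp us vs : R) : R :=
  up + vs * (up - us) / (vp - vs) - e2.

Definition piece3 (s1 s2 lft mid rgt t x : R) : R :=
  if Rlt_dec x (s1 * t) then lft else if Rlt_dec x (s2 * t) then mid else rgt.

Definition brio_u (e2 um vm up vp us vs : R) (t x : R) : R :=
  piece3 (sigma1 e2 um vm us vs) (sigma2 e2 up vp us vs) um us up t x.
Definition brio_v (e2 um vm up vp us vs : R) (t x : R) : R :=
  piece3 (sigma1 e2 um vm us vs) (sigma2 e2 up vp us vs) vm vs vp t x.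

(* Main.v *)
Require Import Defs.
From Stdlib Require Import Reals Lra Psatz Lia ZArith Classical ClassicalEpsilon.
From Coquelicot Require Import Coquelicot.
Open Scope R_scope.

Lemma abs_inv x y : Rabs x <= y -> -y <= x <= y.
Proof. unfold Rabs; destruct (Rcase_abs x); intros; lra. Qed.

Lemma abs_lt_inv x y : Rabs x < y -> -y < x < y.
Proof. unfold Rabs; destruct (Rcase_abs x); intros; lra. Qed.

Lemma cont_of_eps (f : R -> R) x :
  (forall eps, 0 < eps -> exists del, 0 < del /\
     forall y, Rabs (y - x) < del -> Rabs (f y - f x) < eps) -> continuous f x.
Proof.
  intros H. apply continuity_pt_filterlim. intros eps Heps.
  destruct (H eps Heps) as [del [Hd Hy]]. exists del; split; [lra|].
  intros y [_ Hy']. simpl in *. unfold R_dist in *. apply Hy; auto.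
Qed.

Section S.
Variables (f : R -> R -> R) (a b c d : R).
Hypothesis (Hc : cont2 f) (Hab : a < b) (Hcd : c < d)
  (Hs : forall t x, ~ (a <= t <= b /\ c <= x <= d) -> f t x = 0).

Lemma guc : forall eps, 0 < eps -> exists del, 0 < del /\
  forall t x t' x', Rabs (t' - t) < del -> Rabs (x' - x) < del ->
    Rabs (f t' x' - f t x) < eps.
Proof.
  intros eps He.
  assert (He2 : 0 < eps / 2) by lra.
  assert (Hdf : forall u v, {del : posreal | forall t' x', Rabs (t' - u) < del ->
        Rabs (x' - v) < del -> Rabs (f t' x' - f u v) < eps / 2}).
  { intros u v. apply constructive_indefinite_description.
    destruct (Hc u v (eps/2) He2) as [del [Hd H]]. exists (mkposreal del Hd). exact H. }
  destruct (compactness_value_2d (a-1) (b+1) (c-1) (d+1)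
              (fun u v => pos_div_2 (proj1_sig (Hdf u v)))) as [dd Hdd].
  exists (Rmin dd 1). split. { apply Rmin_pos; [apply cond_pos | lra]. }
  intros t x t' x' H1 H2.
  assert (Hm1 : Rmin dd 1 <= dd) by apply Rmin_l.
  assert (Hm2 : Rmin dd 1 <= 1) by apply Rmin_r.
  destruct (classic (a-1 <= t <= b+1 /\ c-1 <= x <= d+1)) as [[Hin1 Hin2]|Hout].
  - specialize (Hdd t x Hin1 Hin2). apply NNPP. intro Hn. apply Hdd.
    intros [u [v [_ [_ [Hu [Hv Hd]]]]]]. apply Hn.
    pose proof (proj2_sig (Hdf u v)) as HD. simpl in Hu, Hv, Hd.
    set (D := proj1_sig (Hdf u v)) in *. clearbody D.
    simpl in HD. pose proof (cond_pos D) as HDp.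
    assert (A1 := HD t x ltac:(lra) ltac:(lra)).
    assert (A2 := HD t' x').
    assert (Rabs (t' - u) < D).
    { apply Rle_lt_trans with (Rabs (t' - t) + Rabs (t - u)).
      replace (t' - u) with ((t' - t) + (t - u)) by ring. apply Rabs_triang. lra. }
    assert (Rabs (x' - v) < D).
    { apply Rle_lt_trans with (Rabs (x' - x) + Rabs (x - v)).
      replace (x' - v) with ((x' - x) + (x - v)) by ring. apply Rabs_triang. lra. }
    specialize (A2 H H0).
    apply Rle_lt_trans with (Rabs (f t' x' - f u v) + Rabs (f t x - f u v)).
    { replace (f t' x' - f t x) with ((f t' x' - f u v) + - (f t x - f u v)) by ring.
      rewrite <- (Rabs_Ropp (f t x - f u v)). apply Rabs_triang. }
    lra.
  - apply abs_lt_inv in H1. apply abs_lt_inv in H2.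
    rewrite (Hs t x), (Hs t' x'). rewrite Rminus_0_r, Rabs_R0. lra.
    + intros [[? ?] [? ?]]. apply Hout. lra.
    + intros [[? ?] [? ?]]. apply Hout. lra.
Qed.

Lemma nat_unb r : exists n : nat, r < INR n.
Proof.
  destruct (archimed r) as [H1 _].
  destruct (Z_le_gt_dec (up r) 0) as [Hz|Hz].
  - exists O. simpl. apply IZR_le in Hz. lra.
  - exists (Z.to_nat (up r)). rewrite INR_IZR_INZ, Z2Nat.id by lia. lra.
Qed.

Lemma bnd : exists M, 0 < M /\ forall t x, Rabs (f t x) <= M.
Proof.
  destruct (guc 1 ltac:(lra)) as [del [Hd H]].
  set (h := del / 2).
  assert (P : forall n : nat, forall t x, d - INR n * h < x -> Rabs (f t x) <= INR n).
  { induction n as [|n IH]; intros t x Hx.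
    - simpl in Hx. rewrite Hs. rewrite Rabs_R0. simpl; lra. intros [_ [_ ?]]. lra.
    - rewrite S_INR in *. destruct (Rlt_dec d x) as [Hdx|Hdx].
      + rewrite Hs. rewrite Rabs_R0. pose proof (pos_INR n). lra. intros [_ [_ ?]]. lra.
      + assert (A := IH t (x + h) ltac:(unfold h in *; lra)).
        assert (B := H t (x+h) t x ltac:(rewrite Rminus_diag, Rabs_R0; lra)
                     ltac:(replace (x - (x+h)) with (-h) by ring; rewrite Rabs_Ropp;
                           rewrite Rabs_pos_eq; unfold h; lra)).
        apply Rle_trans with (Rabs (f t x - f t (x+h)) + Rabs (f t (x+h))).
        { replace (f t x) with ((f t x - f t (x+h)) + f t (x+h)) at 1 by ring.
          apply Rabs_triang. }
        lra. }
  destruct (nat_unb ((d - c) / h)) as [n Hn].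
  assert (Hh : 0 < h) by (unfold h; lra).
  assert (Hn' : d - c < INR n * h).
  { apply Rmult_lt_compat_r with (r := h) in Hn; auto.
    unfold Rdiv in Hn. rewrite Rmult_assoc, Rinv_l, Rmult_1_r in Hn; lra. }
  exists (INR n + 1). split. { pose proof (pos_INR n). lra. }
  intros t x. destruct (Rlt_dec (d - INR n * h) x) as [Hx|Hx].
  - specialize (P n t x Hx). lra.
  - rewrite Hs. rewrite Rabs_R0. pose proof (pos_INR n). lra. intros [_ [? _]]. lra.
Qed.

Lemma cx : forall t x, continuous (f t) x.
Proof.
  intros t x. apply cont_of_eps. intros eps He.
  destruct (guc eps He) as [del [Hd H]]. exists del; split; auto.
  intros y Hy. apply H; auto. rewrite Rminus_diag, Rabs_R0; lra.
Qed.

Lemma exf : forall t y z, ex_RInt (f t) y z.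
Proof. intros. apply (ex_RInt_continuous (V:=R_CompleteNormedModule)). intros; apply cx. Qed.

End S.

Lemma abs_RInt_gen (g : R -> R) y z K : ex_RInt g y z ->
  (forall x, Rmin y z <= x <= Rmax y z -> Rabs (g x) <= K) ->
  Rabs (RInt g y z) <= Rabs (z - y) * K.
Proof.
  intros Hex HK. destruct (Rle_dec y z) as [Hyz|Hyz].
  - rewrite (Rabs_pos_eq (z - y)) by lra. apply abs_RInt_le_const; auto.
    intros t Ht. apply HK. rewrite Rmin_left, Rmax_right; lra.
  - rewrite <- (opp_RInt_swap g z y) by (apply ex_RInt_swap; auto).
    change (opp (RInt g z y)) with (- RInt g z y). rewrite Rabs_Ropp.
    rewrite (Rabs_left (z - y)) by lra.
    replace (- (z - y)) with (y - z) by ring.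
    apply abs_RInt_le_const; [lra | apply ex_RInt_swap; auto |].
    intros t Ht. apply HK. rewrite Rmin_right, Rmax_left; lra.
Qed.

Lemma scal_R (x y : R) : scal x y = x * y. Proof. reflexivity. Qed.
Lemma plus_R (x y : R) : plus x y = x + y. Proof. reflexivity. Qed.
Lemma minus_R (x y : R) : minus x y = x - y. Proof. reflexivity. Qed.
Lemma opp_R (x : R) : opp x = - x. Proof. reflexivity. Qed.

Ltac toR := cbv beta; match goal with |- ?A = ?B => change (@eq R A B) end.
Ltac unR := unfold minus; unfold scal, plus, opp; simpl; unfold mult; simpl.
Ltac mm := unfold Rmin, Rmax in *; repeat destruct Rle_dec; try lra.

Lemma step_int (g s : R -> R) c d p : c < d -> (forall y z, ex_RInt g y z) ->
  (forall x, x < c \/ d < x -> g x = 0) ->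
  (forall x, x < p -> s x = 0) -> (forall x, p < x -> s x = 1) ->
  is_RInt (fun x => s x * g x) c d (RInt g p d).
Proof.
  intros Hcd Hex Hz Hs0 Hs1.
  set (u := Rmax c (Rmin p d)).
  assert (Hu : c <= u <= d) by (unfold u; mm).
  assert (I1 : is_RInt (fun x => s x * g x) c u 0).
  { apply is_RInt_ext with (f := fun _ => 0).
    { intros x Hx. toR. rewrite Hs0. ring. unfold u in *; mm. }
    assert (HH := is_RInt_const (V:=R_NormedModule) c u 0).
    rewrite scal_R, Rmult_0_r in HH. exact HH. }
  assert (I2 : is_RInt (fun x => s x * g x) u d (RInt g u d)).
  { apply is_RInt_ext with (f := g).
    { intros x Hx. toR. rewrite Hs1. ring. unfold u in *; mm. }
    apply (RInt_correct (V:=R_CompleteNormedModule)). apply Hex. }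
  assert (I3 : RInt g p u = 0).
  { rewrite (RInt_ext g (fun _ => 0)).
    rewrite RInt_const. rewrite scal_R. apply Rmult_0_r.
    intros x Hx. apply Hz. unfold u in *; mm. }
  replace (RInt g p d) with (plus 0 (RInt g u d)).
  - apply (is_RInt_Chasles (V:=R_NormedModule)) with u; auto.
  - rewrite <- I3. apply (RInt_Chasles (V:=R_CompleteNormedModule)); apply Hex.
Qed.

Lemma piece_int (g : R -> R) c d p q L Mm Rr : c < d -> (forall y z, ex_RInt g y z) ->
  (forall x, x < c \/ d < x -> g x = 0) -> p <= q ->
  is_RInt (fun x => (if Rlt_dec x p then L else if Rlt_dec x q then Mm else Rr) * g x) c d
    (L * RInt g c d + (Mm - L) * RInt g p d + (Rr - Mm) * RInt g q d).
Proof.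
  intros Hcd Hex Hz Hpq.
  assert (A := RInt_correct (V:=R_CompleteNormedModule) g c d (Hex c d)).
  assert (B := step_int g (fun x => if Rlt_dec x p then 0 else 1) c d p Hcd Hex Hz
     ltac:(intros x Hx; cbv beta; destruct Rlt_dec; lra) ltac:(intros x Hx; cbv beta; destruct Rlt_dec; lra)).
  assert (C := step_int g (fun x => if Rlt_dec x q then 0 else 1) c d q Hcd Hex Hz
     ltac:(intros x Hx; cbv beta; destruct Rlt_dec; lra) ltac:(intros x Hx; cbv beta; destruct Rlt_dec; lra)).
  assert (HH := is_RInt_plus _ _ _ _ _ _
     (is_RInt_plus _ _ _ _ _ _ (is_RInt_scal _ _ _ L _ A) (is_RInt_scal _ _ _ (Mm - L) _ B))
     (is_RInt_scal _ _ _ (Rr - Mm) _ C)).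
  eapply is_RInt_ext; [|exact HH].
  intros x _. toR. unR.
  destruct (Rlt_dec x p); destruct (Rlt_dec x q); try lra; ring.
Qed.

Lemma heav_int (g : R -> R) c d p A B : c < d -> (forall y z, ex_RInt g y z) ->
  (forall x, x < c \/ d < x -> g x = 0) ->
  is_RInt (fun x => (A + B * Heav (x - p)) * g x) c d (A * RInt g c d + B * RInt g p d).
Proof.
  intros Hcd Hex Hz.
  assert (HA := RInt_correct (V:=R_CompleteNormedModule) g c d (Hex c d)).
  assert (HB := step_int g (fun x => Heav (x - p)) c d p Hcd Hex Hz
     ltac:(intros x Hx; cbv beta; unfold Heav; destruct Rlt_dec; lra)
     ltac:(intros x Hx; cbv beta; unfold Heav; destruct Rlt_dec; lra)).
  assert (HH := is_RInt_plus _ _ _ _ _ _ (is_RInt_scal _ _ _ A _ HA) (is_RInt_scal _ _ _ B _ HB)).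
  eapply is_RInt_ext; [|exact HH].
  intros x _. toR. unR. ring.
Qed.

Section S2.
Variables (f : R -> R -> R) (a b c d : R).
Hypothesis (Hc : cont2 f) (Hab : a < b) (Hcd : c < d)
  (Hs : forall t x, ~ (a <= t <= b /\ c <= x <= d) -> f t x = 0).

Lemma zx : forall t x, x < c \/ d < x -> f t x = 0.
Proof. intros t x Hx. apply Hs. intros [_ ?]. lra. Qed.

Lemma Jdiff t t' y y' : RInt (f t') y' d - RInt (f t) y d =
  RInt (f t') y' y + RInt (fun x => f t' x - f t x) y d.
Proof.
  assert (E := exf f a b c d Hc Hab Hcd Hs).
  rewrite <- (RInt_Chasles (V:=R_CompleteNormedModule) (f t') y' y d) by apply E.
  assert (HM := RInt_minus (V:=R_CompleteNormedModule) (f t') (f t) y d (E _ _ _) (E _ _ _)).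
  change (RInt (fun x => f t' x - f t x) y d = minus (RInt (f t') y d) (RInt (f t) y d)) in HM.
  rewrite HM. unR. ring.
Qed.

Lemma Jcont p q t0 : continuous (fun t => RInt (f t) (p*t+q) d) t0.
Proof.
  destruct (bnd f a b c d Hc Hab Hcd Hs) as [M [HM HMb]].
  assert (E := exf f a b c d Hc Hab Hcd Hs).
  apply cont_of_eps. intros eps He.
  set (K := Rabs (d - (p*t0+q)) + 1).
  assert (HK : 0 < K) by (unfold K; pose proof (Rabs_pos (d - (p*t0+q))); lra).
  destruct (guc f a b c d Hc Hab Hcd Hs (eps / (2*K)) ltac:(apply Rdiv_lt_0_compat; lra))
    as [del [Hd Hg]].
  set (L := M * (Rabs p + 1)).
  assert (HL : 0 < L) by (unfold L; pose proof (Rabs_pos p); nra).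
  exists (Rmin del (eps / (2*L))). split.
  { apply Rmin_pos; auto. apply Rdiv_lt_0_compat; lra. }
  intros t Ht.
  assert (Ht1 : Rabs (t - t0) < del) by (eapply Rlt_le_trans; [exact Ht| apply Rmin_l]).
  assert (Ht2 : Rabs (t - t0) < eps / (2*L)) by (eapply Rlt_le_trans; [exact Ht| apply Rmin_r]).
  rewrite Jdiff.
  assert (B1 : Rabs (RInt (f t) (p*t+q) (p*t0+q)) <= Rabs (p*t0+q - (p*t+q)) * M).
  { apply abs_RInt_gen; auto. }
  assert (B2 : Rabs (RInt (fun x => f t x - f t0 x) (p*t0+q) d) <= Rabs (d - (p*t0+q)) * (eps/(2*K))).
  { apply abs_RInt_gen.
    - apply (ex_RInt_minus (V:=R_NormedModule)); apply E.
    - intros x _. left. apply Hg; auto. rewrite Rminus_diag, Rabs_R0; lra. }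
  replace (p*t0+q - (p*t+q)) with (- (p * (t - t0))) in B1 by ring.
  rewrite Rabs_Ropp, Rabs_mult in B1.
  assert (B1' : Rabs p * Rabs (t - t0) * M <= eps / 2).
  { apply Rle_trans with ((Rabs p + 1) * (eps / (2*L)) * M).
    - apply Rmult_le_compat_r; [lra|]. apply Rmult_le_compat; try apply Rabs_pos; lra.
    - unfold L. right. pose proof (Rabs_pos p). field. split; lra. }
  assert (B2' : Rabs (d - (p*t0+q)) * (eps/(2*K)) < eps / 2).
  { apply Rlt_le_trans with (K * (eps / (2*K))).
    - apply Rmult_lt_compat_r. apply Rdiv_lt_0_compat; lra. unfold K; lra.
    - right. field. lra. }
  apply Rle_lt_trans with (Rabs (RInt (f t) (p * t + q) (p * t0 + q)) +
                           Rabs (RInt (fun x : R => f t x - f t0 x) (p * t0 + q) d)).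
  apply Rabs_triang. lra.
Qed.

Lemma Fline p t0 : continuous (fun t => f t (p*t)) t0.
Proof.
  apply cont_of_eps. intros eps He.
  destruct (guc f a b c d Hc Hab Hcd Hs eps He) as [del [Hd Hg]].
  exists (del / (Rabs p + 1)). split.
  { apply Rdiv_lt_0_compat; auto. pose proof (Rabs_pos p); lra. }
  intros t Ht. apply Hg.
  - apply Rlt_le_trans with (del / (Rabs p + 1)); auto.
    unfold Rdiv. pose proof (Rabs_pos p).
    rewrite <- (Rmult_1_r del) at 2. apply Rmult_le_compat_l; [lra|].
    rewrite <- Rinv_1. apply Rinv_le_contravar; lra.
  - replace (p*t - p*t0) with (p*(t-t0)) by ring. rewrite Rabs_mult.
    pose proof (Rabs_pos p). pose proof (Rabs_pos (t - t0)).
    apply Rle_lt_trans with ((Rabs p + 1) * Rabs (t - t0)). nra.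
    apply Rmult_lt_compat_l with (r := Rabs p + 1) in Ht; [|lra].
    replace ((Rabs p + 1) * (del / (Rabs p + 1))) with del in Ht by (field; lra). lra.
Qed.
End S2.

Section S3.
Variables (f : R -> R -> R) (a b c d : R).
Hypothesis (Hc : cont2 f) (Hab : a < b) (Hcd : c < d)
  (Hs : forall t x, ~ (a <= t <= b /\ c <= x <= d) -> f t x = 0).

Lemma Jsub t y z : RInt (f t) y d - RInt (f t) z d = RInt (f t) y z.
Proof.
  assert (E := exf f a b c d Hc Hab Hcd Hs).
  rewrite <- (RInt_Chasles (V:=R_CompleteNormedModule) (f t) y z d) by apply E.
  unR. ring.
Qed.

Lemma Jlip M t y z : (forall t x, Rabs (f t x) <= M) ->
  Rabs (RInt (f t) y d - RInt (f t) z d) <= M * Rabs (y - z).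
Proof.
  intros HM. rewrite Jsub. rewrite Rmult_comm, Rabs_minus_sym.
  apply abs_RInt_gen. apply (exf f a b c d Hc Hab Hcd Hs). intros; auto.
Qed.

Lemma Imid t p q z eu : p <= q -> (forall x, p <= x <= q -> Rabs (f t x - f t z) <= eu) ->
  Rabs (RInt (f t) p q - (q - p) * f t z) <= (q - p) * eu.
Proof.
  intros Hpq H.
  assert (E := exf f a b c d Hc Hab Hcd Hs).
  assert (HH := is_RInt_minus (V:=R_NormedModule) _ _ p q _ _
                  (RInt_correct (V:=R_CompleteNormedModule) _ _ _ (E t p q))
                  (is_RInt_const (V:=R_NormedModule) p q (f t z))).
  replace (RInt (f t) p q - (q - p) * f t z) with (RInt (fun x => f t x - f t z) p q).
  - apply abs_RInt_le_const; auto. eexists; exact HH.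
  - apply is_RInt_unique. eapply is_RInt_ext; [|exact HH]. intros; toR; unR; ring.
Qed.

Lemma cmul (A : R) (F : R -> R) t0 : continuous F t0 -> continuous (fun t => A * F t) t0.
Proof.
  intros H. apply (continuous_mult (K:=R_AbsRing) (fun _ => A) F); auto.
  apply continuous_const.
Qed.

Lemma cadd (F G : R -> R) t0 : continuous F t0 -> continuous G t0 ->
  continuous (fun t => F t + G t) t0.
Proof.
  intros H1 H2. apply (continuous_plus (K:=R_AbsRing) (V:=R_NormedModule) F G); auto.
Qed.

Lemma Gcont (A B C p1 q1 p2 q2 p3 q3 : R) t0 :
  continuous (fun t => A * RInt (f t) (p1*t+q1) d + B * RInt (f t) (p2*t+q2) d
                       + C * RInt (f t) (p3*t+q3) d) t0.
Proof.
  assert (J := Jcont f a b c d Hc Hab Hcd Hs).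
  apply cadd; [apply cadd|]; apply cmul; apply J.
Qed.

Lemma Wcont K p t0 : continuous (fun t => K * t * f t (p * t)) t0.
Proof.
  apply (continuous_mult (K:=R_AbsRing) (fun t => K * t) (fun t => f t (p*t))).
  apply cmul. apply continuous_id.
  apply (Fline f a b c d Hc Hab Hcd Hs).
Qed.
End S3.

Lemma DInt_of (F : R -> R -> R) (g : R -> R) a b c d :
  (forall t, a <= t <= b -> is_RInt (F t) c d (g t)) -> ex_RInt g a b ->
  DInt_is F a b c d (RInt g a b).
Proof.
  intros H Hg. exists g. split.
  - intros t Ht. exists (ex_RInt_Reals_0 _ _ _ (ex_intro _ _ (H t Ht))).
    rewrite <- RInt_Reals. apply is_RInt_unique. apply H; auto.
  - exists (ex_RInt_Reals_0 _ _ _ Hg). rewrite <- RInt_Reals. reflexivity.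
Qed.

Lemma RInt_is_of g a b : ex_RInt g a b -> RInt_is g a b (RInt g a b).
Proof. intros Hg. exists (ex_RInt_Reals_0 _ _ _ Hg). rewrite <- RInt_Reals. reflexivity. Qed.

Lemma RInt_sub2 g1 g2 a b : ex_RInt g1 a b -> ex_RInt g2 a b ->
  ex_RInt (fun t => g1 t - g2 t) a b /\
  RInt g1 a b - RInt g2 a b = RInt (fun t => g1 t - g2 t) a b.
Proof.
  intros [I1 H1] [I2 H2].
  assert (HH := is_RInt_minus (V:=R_NormedModule) _ _ _ _ _ _ H1 H2).
  split. eexists; exact HH.
  rewrite (is_RInt_unique _ _ _ _ H1), (is_RInt_unique _ _ _ _ H2).
  symmetry. apply is_RInt_unique. exact HH.
Qed.

Lemma sqrt_bnds x y : 0 <= x -> 0 <= y ->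
  x <= sqrt (x^2 + y^2) /\ y <= sqrt (x^2+y^2) /\ sqrt (x^2+y^2) <= x + y.
Proof.
  intros Hx Hy. split; [|split].
  - rewrite <- (sqrt_square x) at 1 by lra. apply sqrt_le_1_alt. nra.
  - rewrite <- (sqrt_square y) at 1 by lra. apply sqrt_le_1_alt. nra.
  - rewrite <- (sqrt_square (x+y)) by lra. apply sqrt_le_1_alt. nra.
Qed.
Lemma alg e1 e2 um vm up vp us vs : 0 < e1 -> 0 < e2 -> 0 < vm -> 0 < vp ->
  two_shock e1 e2 um vm up vp us vs ->
  sigma1 e2 um vm us vs <= sigma2 e2 up vp us vs /\
  Rabs (sigma1 e2 um vm us vs - (um+up)/2) <= 4*e2 + sqrt e1 * (vm+vp) /\
  Rabs (sigma2 e2 up vp us vs - (um+up)/2) <= 4*e2 + sqrt e1 * (vm+vp) /\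
  Rabs (vs * (sigma2 e2 up vp us vs - sigma1 e2 um vm us vs) - (vm+vp)*(um-up)/2)
     <= (vm+vp) * (4*e2 + sqrt e1 * (vm+vp)) /\
  0 < vs.
Proof.
  intros He1 He2 Hvm Hvp [Hmax [[H1 H2] [Hus Hup]]].
  apply Rmax_Rlt in Hmax. destruct Hmax as [Hsm Hsp].
  unfold ustar_formula in Hus. unfold uplus_formula in Hup.
  set (k := sqrt e1) in *.
  assert (Hk : 0 < k) by (apply sqrt_lt_R0; lra).
  assert (Hkk : k * k = e1) by (apply sqrt_sqrt; lra).
  set (R1 := sqrt (e2 ^ 2 + 4 * e1 * (vs + vm) ^ 2)) in *.
  set (R2 := sqrt (e2 ^ 2 + 4 * e1 * (vs + vp) ^ 2)) in *.
  assert (B1 : e2 <= R1 /\ 2*k*(vs+vm) <= R1 /\ R1 <= e2 + 2*k*(vs+vm)).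
  { unfold R1. replace (e2 ^ 2 + 4 * e1 * (vs + vm) ^ 2) with (e2^2 + (2*k*(vs+vm))^2)
      by (rewrite <- Hkk; ring). apply sqrt_bnds; nra. }
  assert (B2 : e2 <= R2 /\ 2*k*(vs+vp) <= R2 /\ R2 <= e2 + 2*k*(vs+vp)).
  { unfold R2. replace (e2 ^ 2 + 4 * e1 * (vs + vp) ^ 2) with (e2^2 + (2*k*(vs+vp))^2)
      by (rewrite <- Hkk; ring). apply sqrt_bnds; nra. }
  clearbody R1 R2 k.
  set (al := (R1 - e2) / (vs + vm)).
  set (be := (e2 + R2) / (vs + vp)).
  assert (Pal : (vs+vm)*al = R1 - e2) by (unfold al; field; lra).
  assert (Pbe : (vs+vp)*be = e2 + R2) by (unfold be; field; lra).
  assert (Eus : us = um - (vs - vm) * al) by (rewrite Hus; unfold al; field; lra).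
  assert (Eup : up = us - (vs - vp) * be) by (rewrite Hup at 1; unfold be; field; lra).
  assert (Es1 : sigma1 e2 um vm us vs = um - vs*al - e2).
  { unfold sigma1. rewrite Eus. field. lra. }
  assert (Es2 : sigma2 e2 up vp us vs = up + vs*be - e2).
  { unfold sigma2. rewrite Eup. field. lra. }
  rewrite Es1, Es2. clearbody al be. rewrite Eup, Eus.
  assert (al0 : 0 <= al) by nra.
  assert (be0 : 0 <= be) by nra.
  assert (alk : al <= 2*k) by nra.
  assert (vbe : vp*be <= 2*k*vp + 2*e2) by nra.
  assert (vbe' : vm*vp*be <= 2*k*vm*vp + 2*vm*e2) by nra.
  assert (Hvs : 0 < vs) by lra.
  split; [nra|]. split; [|split; [|split]].
  - apply Rabs_le; split; nra.
  - apply Rabs_le; split; nra.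
  - set (xi := (vs+vm)*al - (vs+vp)*be - 2*k*(vm-vp)).
    assert (Hxi : -3*e2 <= xi <= -e2) by (unfold xi; lra).
    match goal with |- context [Rabs ?e] =>
      assert (Hd : e = k*(vm-vp)^2 + (vm-vp)*xi/2 + vm*vp*al + vm*vp*be) by (unfold xi; field) end.
    rewrite Hd.
    assert (Hx1 : Rabs ((vm-vp)*xi) <= (vm+vp)*(3*e2)).
    { rewrite Rabs_mult. apply Rmult_le_compat; try apply Rabs_pos.
      apply Rabs_le; lra. apply Rabs_le; lra. }
    assert (Hvv : 0 <= vm*vp) by nra.
    assert (Hx2 : 0 <= vm*vp*al <= 2*k*vm*vp).
    { split. apply Rmult_le_pos; lra.
      replace (2*k*vm*vp) with ((vm*vp)*(2*k)) by ring. apply Rmult_le_compat_l; lra. }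
    assert (Hx3 : 0 <= vm*vp*be) by (apply Rmult_le_pos; lra).
    assert (Hx4 : 0 <= k*(vm-vp)^2) by (apply Rmult_le_pos; [lra | apply pow2_ge_0]).
    apply abs_inv in Hx1.
    assert (0 <= vp*e2) by (apply Rmult_le_pos; lra). assert (0 <= vm*e2) by (apply Rmult_le_pos; lra).
    apply Rabs_le. split; lra.
  - lra.
Qed.
Lemma abs_mul_le x y A B : 0 <= A -> Rabs x <= A -> Rabs y <= B -> Rabs (x*y) <= A*B.
Proof. intros. rewrite Rabs_mult. apply Rmult_le_compat; auto; apply Rabs_pos. Qed.

Lemma pert_v (vm vp vs s1 s2 sg t b M E eu T j1 j2 js jc fs I12 : R) :
  0 < vm -> 0 < vp -> 0 < vs -> 0 < t <= b -> s1 <= s2 -> 0 <= M -> 0 <= eu -> 0 <= E <= 1 ->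
  Rabs (js - j1) <= M * Rabs (sg*t - s1*t) -> Rabs (j2 - js) <= M * Rabs (s2*t - sg*t) ->
  j1 - j2 = I12 ->
  Rabs (I12 - (s2*t - s1*t)*fs) <= (s2*t - s1*t)*eu -> Rabs fs <= M ->
  Rabs (s1 - sg) <= E -> Rabs (s2 - sg) <= E -> Rabs (vs*(s2-s1) - T) <= (vm+vp)*E -> 0 <= T ->
  Rabs (vm*jc + (vs-vm)*j1 + (vp-vs)*j2 - (vm*jc + (vp-vm)*js) - T*t*fs)
    <= b*(2*(vm+vp)*M*E + (T + (vm+vp))*eu).
Proof.
  intros Hvm Hvp Hvs Ht H12 HM Heu HE Hj1 Hj2 HI HI12 Hfs Hs1 Hs2 HT HT0.
  replace (vm*jc + (vs-vm)*j1 + (vp-vs)*j2 - (vm*jc + (vp-vm)*js) - T*t*fs)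
    with (vm*(js - j1) + vp*(j2 - js) + vs*(I12 - (s2*t - s1*t)*fs) + (vs*(s2-s1) - T)*(t*fs))
    by (rewrite <- HI; ring).
  replace (sg*t - s1*t) with ((sg - s1)*t) in Hj1 by ring.
  replace (s2*t - sg*t) with ((s2 - sg)*t) in Hj2 by ring.
  rewrite Rabs_mult, (Rabs_pos_eq t) in Hj1, Hj2 by lra.
  rewrite <- (Rabs_Ropp (sg - s1)) in Hj1. replace (- (sg - s1)) with (s1 - sg) in Hj1 by ring.
  assert (A1 : Rabs (vm*(js - j1)) <= vm*(M*(E*b))).
  { apply abs_mul_le; [lra| rewrite Rabs_pos_eq; lra|].
    eapply Rle_trans; [exact Hj1|]. apply Rmult_le_compat_l; auto.
    apply Rmult_le_compat; try lra; apply Rabs_pos. }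
  assert (A2 : Rabs (vp*(j2 - js)) <= vp*(M*(E*b))).
  { apply abs_mul_le; [lra| rewrite Rabs_pos_eq; lra|].
    eapply Rle_trans; [exact Hj2|]. apply Rmult_le_compat_l; auto.
    apply Rmult_le_compat; try lra; apply Rabs_pos. }
  assert (Hd : 0 <= s2 - s1) by lra.
  assert (HvsT : vs*(s2-s1) <= T + (vm+vp)) by (apply abs_inv in HT; nra).
  assert (A3 : Rabs (vs*(I12 - (s2*t - s1*t)*fs)) <= b*((T + (vm+vp))*eu)).
  { rewrite Rabs_mult, (Rabs_pos_eq vs) by lra.
    apply Rle_trans with (vs * ((s2*t - s1*t)*eu)). apply Rmult_le_compat_l; lra.
    replace (vs * ((s2*t - s1*t)*eu)) with (t * ((vs*(s2-s1))*eu)) by ring.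
    apply Rmult_le_compat; try lra. apply Rmult_le_pos; nra.
    apply Rmult_le_compat_r; lra. }
  assert (A4 : Rabs ((vs*(s2-s1) - T)*(t*fs)) <= ((vm+vp)*E)*(b*M)).
  { apply abs_mul_le; auto. nra. rewrite Rabs_mult, Rabs_pos_eq by lra.
    apply Rmult_le_compat; try lra. apply Rabs_pos. }
  eapply Rle_trans. apply Rabs_triang. eapply Rle_trans. apply Rplus_le_compat_r. apply Rabs_triang.
  eapply Rle_trans. apply Rplus_le_compat_r. apply Rplus_le_compat_r. apply Rabs_triang.
  lra.
Qed.

Lemma pert_u (um up us s1 s2 sg t b M E Cu j1 j2 js jc : R) :
  0 < t <= b -> s1 <= s2 -> 0 <= M -> 0 <= E ->
  Rabs um <= Cu -> Rabs up <= Cu -> Rabs us <= Cu ->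
  Rabs (js - j1) <= M * Rabs (sg*t - s1*t) -> Rabs (j2 - js) <= M * Rabs (s2*t - sg*t) ->
  Rabs (j1 - j2) <= M * Rabs (s2*t - s1*t) ->
  Rabs (s1 - sg) <= E -> Rabs (s2 - sg) <= E ->
  Rabs (um*jc + (us-um)*j1 + (up-us)*j2 - (um*jc + (up-um)*js)) <= b*(4*Cu*M*E).
Proof.
  intros Ht H12 HM HE Hum Hup Hus Hj1 Hj2 Hj12 Hs1 Hs2.
  replace (um*jc + (us-um)*j1 + (up-us)*j2 - (um*jc + (up-um)*js))
    with (um*(js - j1) + us*(j1 - j2) + up*(j2 - js)) by ring.
  replace (sg*t - s1*t) with ((sg - s1)*t) in Hj1 by ring.
  replace (s2*t - sg*t) with ((s2 - sg)*t) in Hj2 by ring.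
  replace (s2*t - s1*t) with ((s2 - s1)*t) in Hj12 by ring.
  rewrite Rabs_mult, (Rabs_pos_eq t) in Hj1, Hj2, Hj12 by lra.
  rewrite <- (Rabs_Ropp (sg - s1)) in Hj1. replace (- (sg - s1)) with (s1 - sg) in Hj1 by ring.
  assert (Hd : Rabs (s2 - s1) <= 2*E).
  { apply abs_inv in Hs1. apply abs_inv in Hs2. rewrite Rabs_pos_eq; lra. }
  assert (Cu0 : 0 <= Cu) by (pose proof (Rabs_pos um); lra).
  assert (A1 : Rabs (um*(js - j1)) <= Cu*(M*(E*b))).
  { apply abs_mul_le; auto. eapply Rle_trans; [exact Hj1|]. apply Rmult_le_compat_l; auto.
    apply Rmult_le_compat; try lra; apply Rabs_pos. }
  assert (A2 : Rabs (up*(j2 - js)) <= Cu*(M*(E*b))).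
  { apply abs_mul_le; auto. eapply Rle_trans; [exact Hj2|]. apply Rmult_le_compat_l; auto.
    apply Rmult_le_compat; try lra; apply Rabs_pos. }
  assert (A3 : Rabs (us*(j1 - j2)) <= Cu*(M*(2*E*b))).
  { apply abs_mul_le; auto. eapply Rle_trans; [exact Hj12|]. apply Rmult_le_compat_l; auto.
    apply Rmult_le_compat; try lra; apply Rabs_pos. }
  eapply Rle_trans. apply Rabs_triang. eapply Rle_trans. apply Rplus_le_compat_r. apply Rabs_triang.
  lra.
Qed.

Theorem theorem5p1 (um up vm vp : R) (Hvm : 0 < vm) (Hvp : 0 < vp) (Hu : up < um)
  (phi : R -> R -> R) (Hphi : smooth2 phi)
  (a b c d : R) (Ha : 0 < a) (Hab : a < b) (Hcd : c < d)
  (Hsupp : forall t x, ~ (a <= t <= b /\ c <= x <= d) -> phi t x = 0) :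
  let sigma := (um + up) / 2 in
  let w := fun t => (vm + vp) * (um - up) * t / 2 in
  exists Lu Lv Lw : R,
    DInt_is (fun t x => (um + (up - um) * Heav (x - sigma * t)) * phi t x) a b c d Lu /\
    DInt_is (fun t x => (vm + (vp - vm) * Heav (x - sigma * t)) * phi t x) a b c d Lv /\
    RInt_is (fun t => w t * phi t (sigma * t)) a b Lw /\
    forall eta, 0 < eta -> exists delta, 0 < delta /\
      forall e1 e2 us vs, 0 < e1 < delta -> 0 < e2 < delta ->
        two_shock e1 e2 um vm up vp us vs ->
        exists Iu Iv : R,
          DInt_is (fun t x => brio_u e2 um vm up vp us vs t x * phi t x) a b c d Iu /\
          DInt_is (fun t x => brio_v e2 um vm up vp us vs t x * phi t x) a b c d Iv /\
          Rabs (Iu - Lu) < eta /\ Rabs (Iv - (Lv + Lw)) < eta.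
Proof.
  cbv zeta beta.
  destruct Hphi as [Dd [HD0 [HDc _]]].
  assert (Hc : cont2 phi).
  { intros t x eps He. destruct (HDc O O t x eps He) as [del [Hd H]].
    exists del; split; auto. intros t' x' H1 H2. rewrite <- !HD0. apply H; auto. }
  set (sg := (um + up) / 2).
  pose proof (exf phi a b c d Hc Hab Hcd Hsupp) as E.
  pose proof (zx phi a b c d Hsupp) as Z.
  assert (Gc := Gcont phi a b c d Hc Hab Hcd Hsupp).
  assert (Cl : forall A B t0, continuous (fun t => A * RInt (phi t) c d + B * RInt (phi t) (sg*t) d) t0).
  { intros. eapply continuous_ext; [|apply (Gc A B 0 0 c sg 0 0 0)]. intros x; cbv beta.
    rewrite ?Rmult_0_l, ?Rplus_0_l, ?Rplus_0_r. reflexivity. }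
  assert (Cg : forall A B C p q t0, continuous (fun t => A * RInt (phi t) c d
        + B * RInt (phi t) (p*t) d + C * RInt (phi t) (q*t) d) t0).
  { intros. eapply continuous_ext; [|apply (Gc A B C 0 c p 0 q 0)]. intros x; cbv beta.
    rewrite ?Rmult_0_l, ?Rplus_0_l, ?Rplus_0_r. reflexivity. }
  assert (exl : forall A B, ex_RInt (fun t => A * RInt (phi t) c d + B * RInt (phi t) (sg*t) d) a b).
  { intros. apply (ex_RInt_continuous (V:=R_CompleteNormedModule)). intros; apply Cl. }
  assert (exg : forall A B C p q, ex_RInt (fun t => A * RInt (phi t) c d
        + B * RInt (phi t) (p*t) d + C * RInt (phi t) (q*t) d) a b).
  { intros. apply (ex_RInt_continuous (V:=R_CompleteNormedModule)). intros; apply Cg. }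
  set (gul := fun t => um * RInt (phi t) c d + (up - um) * RInt (phi t) (sg*t) d).
  set (gvl := fun t => vm * RInt (phi t) c d + (vp - vm) * RInt (phi t) (sg*t) d).
  set (wf := fun t => (vm + vp) * (um - up) * t / 2 * phi t (sg * t)).
  assert (exw : ex_RInt wf a b).
  { apply (ex_RInt_continuous (V:=R_CompleteNormedModule)). intros.
    eapply continuous_ext;
      [|apply (Wcont phi a b c d Hc Hab Hcd Hsupp ((vm + vp) * (um - up) / 2) sg)].
    intros x. unfold wf. toR. field. }
  exists (RInt gul a b), (RInt gvl a b), (RInt wf a b).
  split; [|split; [|split]].
  { apply DInt_of; [|apply exl]. intros t Ht.
    exact (heav_int (phi t) c d (sg*t) um (up-um) Hcd (E t) (Z t)). }
  { apply DInt_of; [|apply exl]. intros t Ht.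
    exact (heav_int (phi t) c d (sg*t) vm (vp-vm) Hcd (E t) (Z t)). }
  { apply RInt_is_of. exact exw. }
  intros eta Heta.
  destruct (bnd phi a b c d Hc Hab Hcd Hsupp) as [M [HM HMb]].
  set (V := vm + vp). assert (HVe : V = vm + vp) by reflexivity.
  set (T := V * (um - up) / 2). assert (HTe : T = V * (um - up) / 2) by reflexivity.
  set (Cu := Rabs um + Rabs up). assert (HCue : Cu = Rabs um + Rabs up) by reflexivity.
  assert (HV : 0 < V) by lra.
  assert (HT0 : 0 <= T) by (rewrite HTe; apply Rmult_le_pos; [apply Rmult_le_pos|]; lra).
  assert (HCu : 0 <= Cu) by (rewrite HCue; pose proof (Rabs_pos um); pose proof (Rabs_pos up); lra).
  set (th := eta / (2 * (b - a))).
  assert (Hth : 0 < th) by (apply Rdiv_lt_0_compat; lra).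
  assert (Hthe : (b - a) * th = eta / 2) by (unfold th; field; lra).
  set (eu := th / (2 * (b * (T + V) + 1))).
  assert (Hbtv : 0 <= b * (T + V)) by (apply Rmult_le_pos; lra).
  assert (Heu : 0 < eu) by (apply Rdiv_lt_0_compat; lra).
  assert (Heue : (b * (T + V) + 1) * eu = th / 2) by (unfold eu; field; lra).
  destruct (guc phi a b c d Hc Hab Hcd Hsupp eu Heu) as [du [Hdu Hg]].
  set (K0 := 2 * b * V * M + 4 * Cu * M * b).
  assert (HK0 : 0 <= K0).
  { unfold K0. assert (0 <= b * V * M) by (apply Rmult_le_pos; [apply Rmult_le_pos|]; lra).
    assert (0 <= Cu * M * b) by (apply Rmult_le_pos; [apply Rmult_le_pos|]; lra). lra. }
  set (ga := Rmin 1 (Rmin (du / (2 * b)) (th / (2 * (K0 + 1))))).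
  assert (Hga1 : ga <= 1) by apply Rmin_l.
  assert (Hga2 : ga <= du / (2 * b)) by (eapply Rle_trans; [apply Rmin_r| apply Rmin_l]).
  assert (Hga3 : ga <= th / (2 * (K0 + 1))) by (eapply Rle_trans; [apply Rmin_r| apply Rmin_r]).
  assert (Hga : 0 < ga).
  { unfold ga. apply Rmin_pos; [lra|]. apply Rmin_pos; apply Rdiv_lt_0_compat; lra. }
  assert (HgaK : K0 * ga <= th / 2).
  { apply Rle_trans with ((K0 + 1) * ga). nra.
    apply Rle_trans with ((K0 + 1) * (th / (2 * (K0 + 1)))).
    apply Rmult_le_compat_l; lra. right. field. lra. }
  assert (Hgab : ga * b <= du / 2).
  { apply Rle_trans with (du / (2 * b) * b). apply Rmult_le_compat_r; lra.
    right. field. lra. }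
  set (rho := ga / (4 + V)).
  assert (Hrho : 0 < rho) by (apply Rdiv_lt_0_compat; lra).
  assert (Hrhoe : rho * (4 + V) = ga) by (unfold rho; field; lra).
  assert (Hrho1 : rho <= 1) by nra.
  exists (rho * rho). split; [nra|].
  intros e1 e2 us vs He1 He2 Hts.
  destruct (alg e1 e2 um vm up vp us vs ltac:(lra) ltac:(lra) Hvm Hvp Hts)
    as [H12 [Hs1 [Hs2 [HT Hvs]]]].
  destruct Hts as [_ [[Hus1 Hus2] _]].
  fold sg in Hs1, Hs2.
  set (s1 := sigma1 e2 um vm us vs) in *.
  set (s2 := sigma2 e2 up vp us vs) in *.
  set (En := 4 * e2 + sqrt e1 * (vm + vp)) in *.
  rewrite <- HVe in HT.
  assert (Hsq : sqrt e1 < rho).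
  { rewrite <- (sqrt_square rho) by lra. apply sqrt_lt_1; nra. }
  assert (HEn : 0 <= En < ga).
  { unfold En. pose proof (sqrt_pos e1). split. nra.
    assert (sqrt e1 * (vm + vp) < rho * V) by (rewrite <- HVe; apply Rmult_lt_compat_r; lra).
    nra. }
  set (gu := fun t => um * RInt (phi t) c d + (us - um) * RInt (phi t) (s1*t) d
                       + (up - us) * RInt (phi t) (s2*t) d).
  set (gv := fun t => vm * RInt (phi t) c d + (vs - vm) * RInt (phi t) (s1*t) d
                       + (vp - vs) * RInt (phi t) (s2*t) d).
  assert (Hst : forall t, a <= t <= b -> s1 * t <= s2 * t).
  { intros t Ht. apply Rmult_le_compat_r; lra. }
  exists (RInt gu a b), (RInt gv a b).
  split; [|split; [|split]].
  { apply DInt_of; [|apply exg]. intros t Ht. unfold brio_u, piece3.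
    exact (piece_int (phi t) c d (s1*t) (s2*t) um us up Hcd (E t) (Z t) (Hst t Ht)). }
  { apply DInt_of; [|apply exg]. intros t Ht. unfold brio_v, piece3.
    exact (piece_int (phi t) c d (s1*t) (s2*t) vm vs vp Hcd (E t) (Z t) (Hst t Ht)). }
  - destruct (RInt_sub2 gu gul a b (exg _ _ _ _ _) (exl _ _)) as [exd Hd].
    rewrite Hd.
    apply Rle_lt_trans with ((b - a) * th); [|lra].
    apply abs_RInt_le_const; [lra | exact exd |].
    intros t Ht. unfold gu, gul.
    assert (Hus : Rabs us <= Cu).
    { rewrite HCue. unfold Rabs; repeat destruct Rcase_abs; lra. }
    apply Rle_trans with (b * (4 * Cu * M * En)).
    + apply (pert_u um up us s1 s2 sg t b M En Cu); try lra.
      * rewrite HCue. pose proof (Rabs_pos up). lra.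
      * rewrite HCue. pose proof (Rabs_pos um). lra.
      * apply (Jlip phi a b c d Hc Hab Hcd Hsupp M t (sg*t) (s1*t) HMb).
      * apply (Jlip phi a b c d Hc Hab Hcd Hsupp M t (s2*t) (sg*t) HMb).
      * rewrite (Rabs_minus_sym (s2*t)).
        apply (Jlip phi a b c d Hc Hab Hcd Hsupp M t (s1*t) (s2*t) HMb).
    + assert (b * (4 * Cu * M * En) <= K0 * ga); [|lra].
      apply Rle_trans with (K0 * En).
      * replace (b * (4 * Cu * M * En)) with ((4 * Cu * M * b) * En) by ring.
        apply Rmult_le_compat_r; [lra|]. unfold K0.
        assert (0 <= b * V * M) by (apply Rmult_le_pos; [apply Rmult_le_pos|]; lra). lra.
      * apply Rmult_le_compat_l; lra.
  - destruct (RInt_sub2 gv gvl a b (exg _ _ _ _ _) (exl _ _)) as [exd1 Hd1].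
    destruct (RInt_sub2 _ wf a b exd1 exw) as [exd2 Hd2].
    replace (RInt gv a b - (RInt gvl a b + RInt wf a b))
      with (RInt gv a b - RInt gvl a b - RInt wf a b) by ring.
    rewrite Hd1, Hd2.
    apply Rle_lt_trans with ((b - a) * th); [|lra].
    apply abs_RInt_le_const; [lra | exact exd2 |].
    intros t Ht. unfold gv, gvl, wf.
    replace ((vm + vp) * (um - up) * t / 2) with (T * t) by (rewrite HTe, HVe; field).
    apply Rle_trans with (b * (2 * V * M * En + (T + V) * eu)).
    + rewrite HVe. apply (pert_v vm vp vs s1 s2 sg t b M En eu T
          (RInt (phi t) (s1*t) d) (RInt (phi t) (s2*t) d) (RInt (phi t) (sg*t) d)
          (RInt (phi t) c d) (phi t (sg*t)) (RInt (phi t) (s1*t) (s2*t))); try lra.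
      * apply (Jlip phi a b c d Hc Hab Hcd Hsupp M t (sg*t) (s1*t) HMb).
      * apply (Jlip phi a b c d Hc Hab Hcd Hsupp M t (s2*t) (sg*t) HMb).
      * apply (Jsub phi a b c d Hc Hab Hcd Hsupp).
      * apply (Imid phi a b c d Hc Hab Hcd Hsupp); [apply Hst; lra|].
        intros x Hx. left. apply Hg.
        -- rewrite Rminus_diag, Rabs_R0. lra.
        -- apply abs_inv in Hs1. apply abs_inv in Hs2.
           assert (En * t <= ga * b) by (apply Rmult_le_compat; lra).
           assert (s1 * t >= (sg - En) * t) by (apply Rle_ge, Rmult_le_compat_r; lra).
           assert (s2 * t <= (sg + En) * t) by (apply Rmult_le_compat_r; lra).
           apply Rabs_def1; nra.
      * apply HMb.
      * rewrite <- HVe. exact HT.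
    + assert (b * (2 * V * M * En) <= K0 * ga).
      { apply Rle_trans with (K0 * En).
        * replace (b * (2 * V * M * En)) with ((2 * b * V * M) * En) by ring.
          apply Rmult_le_compat_r; [lra|]. unfold K0.
          assert (0 <= Cu * M * b) by (apply Rmult_le_pos; [apply Rmult_le_pos|]; lra). lra.
        * apply Rmult_le_compat_l; lra. }
      assert (b * ((T + V) * eu) <= th / 2).
      { rewrite <- Heue. replace (b * ((T + V) * eu)) with ((b * (T + V)) * eu) by ring.
        apply Rmult_le_compat_r; lra. }
      lra.
Qed.
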